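(* Let $P$ be a polygon with vertex set $V$ and a non-empty dissection $D$, and let $d=\{\zeta,\eta\}\in D$ be such that $D = \{d\}\cup D_2$ where $D_2$ is a dissection of the subpolygon $P_2$ with vertex set $V_2 = \{\varepsilon \in V : \eta \le \varepsilon \le \zeta\}$ (so no diagonal of $D$ has an end point strictly between $\zeta$ and $\eta$). If $\alpha \neq \beta$ are in $V_2$, then $\mathcal{T}_{P,D}(\alpha,\beta) = \mathcal{T}_{P_2,D_2}(\alpha,\beta)$.
   Context: A polygon $P$ is a finite set $V$ of at least three vertices with a cyclic order, pictured as a convex polygon in the plane with vertices anticlockwise. For vertices $a,b$, ''$a \le \varepsilon \le b$'' means $\varepsilon$ lies on the cyclic interval from $a$ to $b$ traversed in the positive cyclic direction, endpoints included (''$<$'' excludes the endpoint). A subpolygon is a subset of $V$ of at least three vertices with the induced cyclic order. A diagonal is a two-element subset of the vertex set (edges included); non-edges are internal. Two diagonals cross if they consist of four distinct vertices $\alpha,\beta,\gamma,\delta$ appearing cyclically as $\alpha,\gamma,\beta,\delta$ or $\alpha,\delta,\beta,\gamma$. A dissection is a set of pairwise non-crossing internal diagonals. For vertices $\pi_1\neq\pi_p$, a $T$-path from $\pi_1$ to $\pi_p$ w.r.t. a dissection $D$ of a polygon $Q$ is a tuple $(\pi_1,\dots,\pi_p)$ of vertices of $Q$ with: (i) $\{\pi_1,\pi_2\},\dots,\{\pi_{p-1},\pi_p\}$ pairwise different diagonals; (ii) no $\{\pi_i,\pi_{i+1}\}$ crosses a diagonal of $D$; (iii) each $\{\pi_{2j},\pi_{2j+1}\}$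 lies in $D$, and these cross the segment $\{\pi_1,\pi_p\}$ at pairwise different points progressing monotonically from $\pi_1$ to $\pi_p$. $\mathcal{T}_{Q,D}(\alpha,\beta)$ denotes the set of such paths from $\alpha$ to $\beta$. *)

(* Defs.v *)
(* A polygon is modelled as a set of vertices Q : {set 'I_n}
   (with at least 3 elements), with the cyclic order induced from the standard
   cyclic order 0 < 1 < ... < n-1 < 0 of 'I_n (anticlockwise). *)
From mathcomp Require Import all_boot.
Set Implicit Arguments. Unset Strict Implicit. Unset Printing Implicit Defensive.

Section Polygons.
Variable n : nat.

(* a <= e <= b : e lies on the closed cyclic interval from a to b
   traversed in the positive direction. *)
Definition in_arc (a b e : 'I_n) : bool :=
  if (a <= b)%N then (a <= e <= b)%N else (a <= e)%N || (e <= b)%N.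

Definition in_oarc (a b e : 'I_n) : bool :=
  [&& in_arc a b e, e != a & e != b].

Definition polygon (Q : {set 'I_n}) : Prop := (3 <= #|Q|)%N.

Definition subpoly (Q : {set 'I_n}) (a b : 'I_n) : {set 'I_n} :=
  [set e in Q | in_arc a b e].

(* a diagonal of Q: a two-element subset of its vertex set (edges included) *)
Definition is_diag (Q d : {set 'I_n}) : bool := (d \subset Q) && (#|d| == 2).

Definition is_edge (Q d : {set 'I_n}) : bool :=
  [exists a, exists b, [&& d == [set a; b], a != b &
     [forall e, (e \in Q) ==> ~~ in_oarc a b e]]].

Definition internal_diag (Q d : {set 'I_n}) : bool :=
  is_diag Q d && ~~ is_edge Q d.

(* crossing: four distinct vertices a,b,c,e appearing cyclically as a,c,b,e
   with d1 = {a,b}, d2 = {c,e} (the other order is covered by swapping c,e). *)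
Definition crosses (d1 d2 : {set 'I_n}) : bool :=
  [exists a, exists b, exists c, exists e,
    [&& d1 == [set a; b], d2 == [set c; e], uniq [:: a; b; c; e],
        in_oarc a b c & in_oarc b a e]].

Definition dissection (Q : {set 'I_n}) (D : {set {set 'I_n}}) : bool :=
  [forall d in D, internal_diag Q d] &&
  [forall d1 in D, forall d2 in D, ~~ crosses d1 d2].

Definition steps (s : seq 'I_n) : seq {set 'I_n} :=
  [seq [set x.1; x.2] | x <- zip s (behead s)].

(* For two diagonals dj, dk (both crossing the segment towards b),
   dk crosses the segment strictly after dj (going towards b): dk lies in the
   closed side of dj containing b (and dj <> dk). *)
Definition before (b : 'I_n) (dj dk : {set 'I_n}) : bool :=
  (dj != dk) &&
  [exists u, exists v, [&& dj == [set u; v], in_arc u v b &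
      dk \subset [set e | in_arc u v e]]].

(* T-paths from a to b w.r.t. the dissection D of the polygon Q.
   0-indexed step k is {pi_(k+1), pi_(k+2)} in the paper's 1-indexed notation,
   so the paper's even steps {pi_2j, pi_2j+1} are the odd k. *)
Definition is_Tpath (Q : {set 'I_n}) (D : {set {set 'I_n}}) (a b : 'I_n)
    (s : seq 'I_n) : Prop :=
  let st := steps s in
  [/\ (exists t, s = a :: t /\ last a t = b) /\ a != b,
      all (fun x => x \in Q) s &&
      all (is_diag Q) st && uniq st,
      (forall d, d \in st -> forall d', d' \in D -> ~~ crosses d d'),
      (forall k, (k < size st)%N -> odd k ->
          nth set0 st k \in D /\ crosses (nth set0 st k) [set a; b])
    & (forall j k, (j < k)%N -> (k < size st)%N -> odd j -> odd k ->
          before b (nth set0 st j) (nth set0 st k))].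

End Polygons.

(* Main.v *)
Require Import Defs.
From mathcomp Require Import all_boot.
From mathcomp Require Import zify.
Set Implicit Arguments.

Lemma key2 n (z h c : 'I_n) : in_arc h z c -> in_oarc z h c -> False.
Proof.
rewrite /in_oarc /in_arc -!(inj_eq val_inj) /=.
case: (leqP h z) => ?; case: (leqP z h) => ? /=; lia.
Qed.

Lemma key n (z h a b c e : 'I_n) : in_arc h z a -> in_arc h z b -> uniq [:: a; b; c; e] ->
  ((c == z) && (e == h)) || ((c == h) && (e == z)) -> in_oarc a b c -> in_oarc b a e -> False.
Proof.
rewrite /in_oarc /in_arc /= !inE.
rewrite -!(inj_eq val_inj) /=.
case: (leqP h z) => ?; case: (leqP a b) => ?; case: (leqP b a) => ? /=; lia.
Qed.

Arguments key {n z h a b c e}.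
Arguments key2 {n z h c}.

Lemma size_steps n (s : seq 'I_n) : size (steps s) = (size s).-1.
Proof. rewrite /steps size_map size_zip size_behead; case: s => [|x t] //=; apply/minn_idPr; lia. Qed.

Lemma nth_steps n (s : seq 'I_n) x0 k : (k.+1 < size s)%N ->
  nth set0 (steps s) k = [set nth x0 s k; nth x0 s k.+1].
Proof.
move=> Hk; rewrite /steps (nth_map (x0,x0)); last by rewrite size_zip size_behead; lia.
rewrite nth_zip_cond size_zip size_behead ifT; last by lia.
by rewrite /= nth_behead.
Qed.

Lemma mem_steps n (s : seq 'I_n) (x0 : 'I_n) d : d \in steps s ->
  exists2 x, x \in s & exists2 y, y \in s & d = [set x; y].
Proof.
move=> Hd; have Hk := Hd; rewrite -index_mem size_steps in Hk.
have {}Hk : ((index d (steps s)).+1 < size s)%N by move: Hk; case: (size s) => //=.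
rewrite -(nth_index set0 Hd) (@nth_steps _ _ x0 _ Hk).
exists (nth x0 s (index d (steps s))); first by apply: mem_nth; exact: ltnW.
exists (nth x0 s (index d (steps s)).+1); first by apply: mem_nth.
done.
Qed.

Lemma set2_cases n (x y c e : 'I_n) : [set x; y] = [set c; e] -> c != e ->
  ((c == x) && (e == y)) || ((c == y) && (e == x)).
Proof.
move=> H ce.
have Hc : c \in [set x; y] by rewrite H !inE eqxx.
have He : e \in [set x; y] by rewrite H !inE eqxx orbT.
move: Hc He ce; rewrite !inE => /orP [] /eqP -> /orP [] /eqP ->; rewrite ?eqxx ?orbT //=.
Qed.

Unset Implicit Arguments.

Theorem lemma3p4 (n : nat) (P : {set 'I_n}) (D D2 : {set {set 'I_n}})
    (zeta eta alpha beta : 'I_n) :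
  polygon P -> dissection P D -> D != set0 ->
  [set zeta; eta] \in D ->
  polygon (subpoly P eta zeta) ->
  dissection (subpoly P eta zeta) D2 ->
  D = [set zeta; eta] |: D2 ->
  alpha \in subpoly P eta zeta -> beta \in subpoly P eta zeta -> alpha != beta ->
  forall s : seq 'I_n,
    is_Tpath P D alpha beta s <-> is_Tpath (subpoly P eta zeta) D2 alpha beta s.
Proof.
move=> _ HD _ HdD _ HD2 DE Ha Hb ab s.
set P2 := subpoly P eta zeta.
have P2P : P2 \subset P by apply/subsetP => x; rewrite inE => /andP [].
have inarc : forall x, x \in P2 -> in_arc eta zeta x by move=> x; rewrite inE => /andP [].
have in2 : forall x y u, x \in P2 -> y \in P2 -> u \in [set x; y] -> u \in P2.
  by move=> x y u Hx Hy /set2P [] ->.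
have nc1 : forall x y, x \in P2 -> y \in P2 -> ~~ crosses [set x; y] [set zeta; eta].
  move=> x y Hx Hy; apply/negP => /existsP [a /existsP [b /existsP [c /existsP [e]]]].
  case/and5P => /eqP E1 /eqP E2 U Hc He.
  have ce : c != e by apply: contraTneq U => ->; rewrite /= !inE eqxx ?orbT ?andbF.
  have Ha' : a \in P2 by apply: (in2 x y) => //; rewrite E1 !inE eqxx.
  have Hb' : b \in P2 by apply: (in2 x y) => //; rewrite E1 !inE eqxx orbT.
  exact: (key (inarc _ Ha') (inarc _ Hb') U (set2_cases E2 ce) Hc He).
have nc2 : forall x y, x \in P2 -> y \in P2 -> ~~ crosses [set zeta; eta] [set x; y].
  move=> x y Hx Hy; apply/negP => /existsP [a /existsP [b /existsP [c /existsP [e]]]].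
  case/and5P => /eqP E1 /eqP E2 U Hc He.
  have ab2 : a != b by apply: contraTneq U => ->; rewrite /= !inE eqxx ?orbT ?andbF.
  have Hc' : c \in P2 by apply: (in2 x y) => //; rewrite E2 !inE eqxx.
  have He' : e \in P2 by apply: (in2 x y) => //; rewrite E2 !inE eqxx orbT.
  case/orP: (set2_cases E1 ab2) => /andP [/eqP Ea /eqP Eb]; subst a b.
    exact: (key2 (inarc _ Hc') Hc).
  exact: (key2 (inarc _ He') He).
have D2sub : forall d, d \in D2 -> d \subset P2.
  move=> d Hd; case/andP: HD2 => /forall_inP H _.
  by case/andP: (H d Hd) => /andP [].
have szk : forall k, (k < size (steps s))%N -> (k.+1 < size s)%N.
  by move=> k; rewrite size_steps; case: (size s).
split.
- case=> H1 /andP [/andP [HQ Hdg] Hu] H3 H4 H5.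
  have oddD2 : forall k, (k < size (steps s))%N -> odd k -> nth set0 (steps s) k \in D2.
    move=> k Hk Ho; case: (H4 k Hk Ho); rewrite DE in_setU1 => /orP [/eqP E|//].
    by rewrite E => Hc; move: (nc2 _ _ Ha Hb); rewrite Hc.
  have HQ2 : all (fun x => x \in P2) s.
    apply/(all_nthP alpha) => i Hi.
    case: H1 => [[t [Es Et]] _].
    case: i Hi => [|i] Hi; first by rewrite Es.
    have [Hi2|Hi2] := ltnP i.+2 (size s); last first.
      have -> : i.+1 = (size s).-1 by move: Hi Hi2; case: (size s) => //= m; lia.
      by rewrite nth_last Es /= Et.
    case Ho: (odd i.+1).
    + have Hk : (i.+1 < size (steps s))%N by rewrite size_steps; move: Hi2; case: (size s).
      have := D2sub _ (oddD2 _ Hk Ho); rewrite (@nth_steps _ _ alpha _ (szk _ Hk)).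
      by move/subsetP; apply; rewrite !inE eqxx.
    + have Hk : (i < size (steps s))%N by rewrite size_steps; move: Hi2; case: (size s) => //= m; lia.
      have := D2sub _ (oddD2 _ Hk (negbFE Ho)); rewrite (@nth_steps _ _ alpha _ (szk _ Hk)).
      by move/subsetP; apply; rewrite !inE eqxx orbT.
  split => //.
  + rewrite HQ2 Hu andbT /=; apply/allP => d Hd.
    rewrite /is_diag; case/andP: (allP Hdg d Hd) => _ ->; rewrite andbT.
    case: (@mem_steps _ _ alpha _ Hd) => x Hx [y Hy ->].
    apply/subsetP => u /set2P [] ->; [exact: (allP HQ2) | exact: (allP HQ2)].
  + by move=> d Hd d' Hd'; apply: H3 => //; rewrite DE in_setU1 Hd' orbT.
  + move=> k Hk Ho; split; first exact: oddD2.
    by case: (H4 k Hk Ho).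
- case=> H1 /andP [/andP [HQ Hdg] Hu] H3 H4 H5.
  split => //.
  + rewrite Hu andbT; apply/andP; split.
    * by apply/allP => x /(allP HQ) /(subsetP P2P).
    * apply/allP => d /(allP Hdg) /andP [sub c2].
      by rewrite /is_diag (subset_trans sub P2P) c2.
  + move=> d Hd d'; rewrite DE in_setU1 => /orP [/eqP -> | Hd']; last exact: H3.
    case: (@mem_steps _ _ alpha _ Hd) => x Hx [y Hy ->].
    by apply: nc1; apply: (allP HQ).
  + move=> k Hk Ho; case: (H4 k Hk Ho) => ? ?; split => //.
    by rewrite DE in_setU1 orbC; apply/orP; left.
Qed.
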